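(* Let $n\ge1$, $B=\{0,1,\dots,n\}$ as below, $j\ge0$, $b\in B$, and let $(\mu_i)_{i\in B}\in\mathbb Z^{n+1}$ satisfy $\sum_{i\in B}\mu_i=j$. Put $\mu=(\mu_n-\mu_0)\Lambda_0+(\mu_0-\mu_1)\Lambda_1+\cdots+(\mu_{n-1}-\mu_n)\Lambda_n\in P_{cl}$. Then $$g_j(b,\mu)=q^{\frac12\sum_{i\in B}\mu_i(\mu_i-1)+\sum_{i\in B}H(b\otimes i)\mu_i}\begin{bmatrix}j\\ \mu\end{bmatrix}_q .$$
   Context: Affine algebra $A^{(1)}_n$ with fundamental weights $\Lambda_0,\dots,\Lambda_n$, $P_{cl}=\bigoplus\mathbb Z\Lambda_i$. $B=\{0,1,\dots,n\}$ with weights $wt(b)=\Lambda_{\overline{b+1}}-\Lambda_b$, where $\overline x\in\{0,\dots,n\}$, $\overline x\equiv x\pmod{n+1}$; energy function $H(b\otimes b')=0$ if $b<b'$ and $=1$ if $b\ge b'$. For $j\ge0$, $b\in B$, $\mu\in P_{cl}$: $g_j(b,\mu)=\sum q^{\sum_{i=1}^j iH(b_{i+1}\otimes b_i)}$, summed over $(b_j,\dots,b_1)\in B^j$ with $wt(b_j)+\cdots+wt(b_1)=\mu$, where $b_{j+1}=b$. For an integer vector $\gamma=(\gamma_b)_{b\in B}$: $\begin{bmatrix}j\\ \gamma\end{bmatrix}_q=(q)_j/\prod_{b\in B}(q)_{\gamma_b}$ if $\sum_b\gamma_b=j$ and all $\gamma_b\ge0$, and $0$ otherwise; $(q)_m=\prod_{i=1}^m(1-q^i)$.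 *)

(* Defs.v *)
From HB Require Import structures.
From mathcomp Require Import all_boot all_order all_algebra.
Set Implicit Arguments. Unset Strict Implicit. Unset Printing Implicit Defensive.
Import Order.TTheory GRing.Theory Num.Theory.
Local Open Scope ring_scope.

(* The crystal B = {0,...,n} is represented by 'I_n.+1.
   P_cl = \oplus Z Lambda_i is represented by {ffun 'I_n.+1 -> int},
   the value at k being the coefficient of Lambda_k. *)

Definition succB (n : nat) (b : 'I_n.+1) : 'I_n.+1 := inord ((b + 1) %% n.+1)%N.

Definition wtB (n : nat) (b : 'I_n.+1) : {ffun 'I_n.+1 -> int} :=
  [ffun k => (k == succB b)%:Z - (k == b)%:Z].

Definition Hen (n : nat) (b b' : 'I_n.+1) : nat := if (b < b')%N then 0%N else 1%N.

(* For f : 'I_j -> B encoding (b_j,...,b_1) with b_i = f (i-1), and b_{j+1} = b: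
   bpath j f b i = b_i for 1 <= i <= j+1. *)
Definition bpath (n j : nat) (f : {ffun 'I_j -> 'I_n.+1}) (b : 'I_n.+1) (i : nat)
  : 'I_n.+1 :=
  match i with
  | k.+1 => if (insub k : option 'I_j) is Some i then f i else b
  | 0 => b
  end.

Definition totwt (n j : nat) (f : {ffun 'I_j -> 'I_n.+1}) : {ffun 'I_n.+1 -> int} :=
  \sum_(i < j) wtB (f i).

Definition Dexp (n j : nat) (f : {ffun 'I_j -> 'I_n.+1}) (b : 'I_n.+1) : nat :=
  (\sum_(1 <= i < j.+1) i * Hen (bpath f b i.+1) (bpath f b i))%N.

Definition gfun (n j : nat) (b : 'I_n.+1) (mu : {ffun 'I_n.+1 -> int}) : {poly int} :=
  \sum_(f : {ffun 'I_j -> 'I_n.+1} | totwt f == mu) 'X^(Dexp f b).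

Definition qpoch (m : nat) : {poly int} := \prod_(1 <= i < m.+1) (1 - 'X^i).

Notation ratfun := {fraction {poly int}}.

Definition qmultinom (n j : nat) (gamma : 'I_n.+1 -> int) : ratfun :=
  if ((\sum_(b < n.+1) gamma b) == j%:Z) && [forall b, 0 <= gamma b]
  then (tofrac (qpoch j)) / \prod_(b < n.+1) tofrac (qpoch `|gamma b|%N)
  else 0.

(* mu = (mu_n - mu_0) Lambda_0 + (mu_0 - mu_1) Lambda_1 + ... + (mu_{n-1}-mu_n) Lambda_n,
   i.e. the coefficient of Lambda_k is mu_{k-1 mod n+1} - mu_k. *)
Definition predB (n : nat) (k : 'I_n.+1) : 'I_n.+1 := inord ((k + n) %% n.+1)%N.
Definition muwt (n : nat) (mu : 'I_n.+1 -> int) : {ffun 'I_n.+1 -> int} :=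
  [ffun k => mu (predB k) - mu k].

Definition qF : ratfun := tofrac 'X.

(* Main.v *)
Require Import Defs.
From HB Require Import structures.
From mathcomp Require Import all_boot all_order all_algebra.
From mathcomp Require Import zify ring.
Import Order.TTheory GRing.Theory Num.Theory.
Local Open Scope ring_scope.
Set Implicit Arguments. Unset Strict Implicit. Unset Printing Implicit Defensive.

Lemma succBK (n : nat) (k : 'I_n.+1) : succB (predB k) = k.
Proof.
apply/val_inj; rewrite /succB /predB /=.
rewrite inordK; last by rewrite ltn_mod.
rewrite inordK; last by rewrite ltn_mod.
have := ltn_ord k; move: (val k) => x hx.
by rewrite modnDml -addnA addn1 -modnDmr modnn addn0 modn_small.
Qed.

Lemma predBK (n : nat) (k : 'I_n.+1) : predB (succB k) = k.
Proof.
apply/val_inj; rewrite /succB /predB /=.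
rewrite inordK; last by rewrite ltn_mod.
rewrite inordK; last by rewrite ltn_mod.
have := ltn_ord k; move: (val k) => x hx.
by rewrite modnDml -addnA add1n -modnDmr modnn addn0 modn_small.
Qed.

Lemma predB_S (n i : nat) : (i < n)%N -> predB (inord i.+1 : 'I_n.+1) = inord i.
Proof.
move=> hi; apply/val_inj; rewrite /predB /= !inordK; try lia.
by rewrite addSn -addnS -modnDmr modnn addn0 modn_small //; lia.
Qed.

Definition cnt (n j : nat) (f : {ffun 'I_j -> 'I_n.+1}) (c : 'I_n.+1) : nat :=
  (\sum_(k < j) (f k == c))%N.

Lemma totwtE (n j : nat) (f : {ffun 'I_j -> 'I_n.+1}) (i : 'I_n.+1) :
  totwt f i = (cnt f (predB i))%:Z - (cnt f i)%:Z.
Proof.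
rewrite /totwt sum_ffunE.
under eq_bigr do rewrite ffunE.
rewrite sumrB /cnt -!natz !natr_sum; congr (_ - _); apply: eq_bigr => k _.
  rewrite natz; congr (Posz (nat_of_bool _)).
  apply/eqP/eqP => h; [by rewrite h predBK | by rewrite h succBK].
by rewrite natz; congr (Posz (nat_of_bool _)); exact: eq_sym.
Qed.

Lemma cnt_sum (n j : nat) (f : {ffun 'I_j -> 'I_n.+1}) : (\sum_c cnt f c)%N = j.
Proof.
rewrite /cnt exchange_big /=.
rewrite (eq_bigr (fun _ => 1%N)); first by rewrite sum1_card card_ord.
move=> k _; rewrite (bigD1 (f k)) //= eqxx big1 // => c; by rewrite eq_sym => /negbTE ->.
Qed.

Lemma cnt_char (n j : nat) (f : {ffun 'I_j -> 'I_n.+1}) (mu : 'I_n.+1 -> int) :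
  \sum_(i < n.+1) mu i = j%:Z ->
  (totwt f == muwt mu) = [forall c, (cnt f c)%:Z == mu c].
Proof.
move=> hs; apply/eqP/forallP => [H|H]; last first.
  by apply/ffunP => i; rewrite totwtE ffunE !(eqP (H _)).
pose d c := (cnt f c)%:Z - mu c.
have hd : forall k, d (predB k) = d k.
  move=> k; have := congr1 (fun g : {ffun 'I_n.+1 -> int} => g k) H; rewrite /= totwtE ffunE /d => e.
  rewrite /d -[cnt f (predB k) : int](subrK (cnt f k : int)) e; ring.
have hc : forall i, (i <= n)%N -> d (inord i) = d ord0.
  elim=> [|i IH] hi; first by congr d; apply/val_inj; rewrite /= inordK.
  rewrite -IH; last by lia.
  by rewrite -(@predB_S n i hi) hd.
have hall : forall c, d c = d ord0.
  move=> c; rewrite -(hc c) ?inord_val //; have := ltn_ord c; lia.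
have h0 : d ord0 *+ n.+1 = 0.
  rewrite -[n.+1]card_ord -sumr_const.
  have hcs : \sum_c ((cnt f c)%:Z) = j%:Z.
    have e := cnt_sum f; rewrite -[in RHS]e -natz natr_sum.
    by apply: eq_bigr => c _; rewrite natz.
  by rewrite -(eq_bigr _ (fun c _ => hall c)) /d sumrB hs hcs subrr.
have : d ord0 = 0 by move/eqP: h0; rewrite mulrn_eq0 /= => /eqP.
move=> z c; have := hall c; rewrite z /d => /eqP; by rewrite subr_eq0.
Qed.

Definition ext (n j : nat) (g : {ffun 'I_j -> 'I_n.+1}) (c : 'I_n.+1)
  : {ffun 'I_j.+1 -> 'I_n.+1} :=
  [ffun i : 'I_j.+1 => if (insub (val i) : option 'I_j) is Some k then g k else c].

Lemma ext_max (n j : nat) (g : {ffun 'I_j -> 'I_n.+1}) c : ext g c ord_max = c.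
Proof. by rewrite /ext ffunE insubN //= ltnn. Qed.

Lemma ext_lift (n j : nat) (g : {ffun 'I_j -> 'I_n.+1}) c (k : 'I_j) :
  ext g c (lift ord_max k) = g k.
Proof.
rewrite /ext ffunE; case: insubP => [k' _ e|] /=.
  by congr (g _); apply/val_inj; rewrite e /= /bump leqNgt ltn_ord.
move=> /negP []; have h := ltn_ord k; by rewrite /bump (leqNgt j) h.
Qed.

Lemma ext_widen (n j : nat) (g : {ffun 'I_j -> 'I_n.+1}) c (k : 'I_j) :
  ext g c (widen_ord (leqnSn j) k) = g k.
Proof. by rewrite /ext ffunE /= valK. Qed.

Lemma sum_ffunS (n j : nat) (F : {ffun 'I_j.+1 -> 'I_n.+1} -> {poly int}) :
  \sum_(f : {ffun 'I_j.+1 -> 'I_n.+1}) F f =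
  \sum_(c : 'I_n.+1) \sum_(g : {ffun 'I_j -> 'I_n.+1}) F (ext g c).
Proof.
rewrite pair_bigA /=.
rewrite (reindex (fun p : 'I_n.+1 * {ffun 'I_j -> 'I_n.+1} => ext p.2 p.1)) //=.
exists (fun f => (f ord_max, [ffun k => f (lift ord_max k)])) => [[c g] _|f _] /=.
  by rewrite ext_max; congr pair; apply/ffunP => k; rewrite ffunE ext_lift.
apply/ffunP => i; rewrite /ext ffunE; case: (unliftP ord_max i) => [k ->|->].
  by rewrite /= /bump leqNgt ltn_ord /= valK ffunE.
by rewrite insubN //= ltnn.
Qed.

Lemma cnt_ext (n j : nat) (g : {ffun 'I_j -> 'I_n.+1}) c i :
  cnt (ext g c) i = (cnt g i + (c == i))%N.
Proof.
rewrite /cnt big_ord_recr /= ext_max; congr addn.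
by apply: eq_bigr => k _; rewrite ext_widen.
Qed.

Lemma bpath_ext (n j : nat) (g : {ffun 'I_j -> 'I_n.+1}) c b k :
  (k <= j)%N -> bpath (ext g c) b k.+1 = bpath g c k.+1.
Proof.
move=> hk /=; case: insubP => [i _ e|]; last by rewrite ltnS hk.
by rewrite /ext ffunE e.
Qed.

Lemma Dexp_ext (n j : nat) (g : {ffun 'I_j -> 'I_n.+1}) c b :
  Dexp (ext g c) b = (Dexp g c + j.+1 * Hen b c)%N.
Proof.
rewrite /Dexp big_nat_recr; last done.
congr addn.
  apply: eq_big_nat => i /andP [h1 h2].
  case: i h1 h2 => // i _ h2.
  rewrite !bpath_ext //; lia.
congr (_ * _)%N; congr Hen.
  by rewrite /= insubN //= ltnn.
rewrite bpath_ext // /=.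
by case: insubP => [i hi _|] //; rewrite ltnn in hi.
Qed.

Lemma key (N : nat) (mn : nat -> nat) (b : nat) : (b < N)%N ->
  \sum_(0 <= c < N) 'X^((\sum_(0 <= i < N) mn i) * (c <= b) + \sum_(0 <= i < c) mn i)%N
     * (1 - 'X^(mn c)) =
  'X^(\sum_(0 <= i < b.+1) mn i) * (1 - 'X^(\sum_(0 <= i < N) mn i)) :> {poly int}.
Proof.
move=> hb.
set Q := fun c => (\sum_(0 <= i < c) mn i)%N.
rewrite -/(Q N) -/(Q b.+1).
have hQ : forall c, Q c.+1 = (Q c + mn c)%N by move=> c; rewrite /Q big_nat_recr.
rewrite (big_cat_nat _ (n:=b.+1)) //=.
have e1 : \sum_(0 <= c < b.+1) 'X^(Q N * (c <= b) + Q c)%N * (1 - 'X^(mn c))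
   = 'X^(Q N) * (1 - 'X^(Q b.+1)) :> {poly int}.
  rewrite (telescope_sumr_eq (fun k => - 'X^(Q N + Q k))) //; last first.
    move=> k /andP [_ hk]; rewrite hQ.
    have -> : (k <= b)%N by lia.
    rewrite muln1 !exprD; ring.
  have -> : (Q 0 = 0)%N by rewrite /Q big_geq.
  rewrite !exprD expr0; ring.
have e2 : \sum_(b.+1 <= c < N) 'X^(Q N * (c <= b) + Q c)%N * (1 - 'X^(mn c))
   = 'X^(Q b.+1) - 'X^(Q N) :> {poly int}.
  rewrite (telescope_sumr_eq (fun k => - 'X^(Q k))) //; last first.
    move=> k /andP [hk _]; rewrite hQ.
    have -> : (k <= b)%N = false by lia.
    rewrite muln0 add0n exprD; ring.
  ring.
rewrite e1 e2.
have -> : 'X^(Q N) = 'X^(Q b.+1) * 'X^(Q N - Q b.+1) :> {poly int}.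
  have hle : (Q b.+1 <= Q N)%N.
    by rewrite /Q [X in (_ <= X)%N](big_cat_nat _ (n:=b.+1)) //= ?leq_addr //; lia.
  by rewrite -exprD subnKC.
ring.
Qed.

Definition G (n j : nat) (b : 'I_n.+1) (m : 'I_n.+1 -> nat) : {poly int} :=
  \sum_(f : {ffun 'I_j -> 'I_n.+1} | [forall c, cnt f c == m c]) 'X^(Dexp f b).

Definition decr (n : nat) (m : 'I_n.+1 -> nat) (c : 'I_n.+1) : 'I_n.+1 -> nat :=
  fun i => (m i - (i == c))%N.

Lemma pred_ext (n j : nat) (g : {ffun 'I_j -> 'I_n.+1}) c (m : 'I_n.+1 -> nat) :
  [forall i, cnt (ext g c) i == m i] =
  (0 < m c)%N && [forall i, cnt g i == decr m c i].
Proof.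
apply/forallP/andP => [H|[h0 /forallP H] i].
  have hc := H c; rewrite cnt_ext eqxx in hc.
  split; first by move/eqP: hc => <-; rewrite addn1.
  apply/forallP => i; have := H i; rewrite cnt_ext /decr.
  case: (eqVneq i c) => [->|ne] /=; first by move=> /eqP <-; rewrite addn1 subn1.
  by rewrite addn0 subn0.
rewrite cnt_ext; have := H i; rewrite /decr.
case: (eqVneq i c) => [->|ne] /=; first by move=> /eqP ->; rewrite addn1 subn1 prednK.
by rewrite addn0 subn0.
Qed.

Lemma G_rec_c (n j : nat) (b : 'I_n.+1) (m : 'I_n.+1 -> nat) (c : 'I_n.+1) :
  \sum_(g : {ffun 'I_j -> 'I_n.+1})
     (if [forall i, cnt (ext g c) i == m i] then 'X^(Dexp (ext g c) b) else 0)
  = (if (0 < m c)%N then 'X^(j.+1 * Hen b c) * G j c (decr m c) else 0).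
Proof.
rewrite (eq_bigr (fun g => if (0 < m c)%N && [forall i, cnt g i == decr m c i]
   then 'X^(Dexp (ext g c) b) else 0)); last by move=> g _; rewrite pred_ext.
case: ifP => hc /=.
  rewrite /G big_distrr /= [in RHS]big_mkcond; apply: eq_bigr => g _.
  by case: ifP => _; rewrite ?mulr0 // Dexp_ext exprD mulrC.
by rewrite big1.
Qed.

Lemma G_rec (n j : nat) (b : 'I_n.+1) (m : 'I_n.+1 -> nat) :
  G j.+1 b m = \sum_c (if (0 < m c)%N then 'X^(j.+1 * Hen b c) * G j c (decr m c) else 0).
Proof.
rewrite /G big_mkcond sum_ffunS; apply: eq_bigr => c _.
exact: G_rec_c.
Qed.

Definition PP (n : nat) (m : 'I_n.+1 -> nat) : {poly int} := \prod_c qpoch (m c).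
Definition SS (n : nat) (m : 'I_n.+1 -> nat) : nat := (\sum_c 'C(m c, 2))%N.
Definition HS (n : nat) (b : 'I_n.+1) (m : 'I_n.+1 -> nat) : nat := (\sum_c Hen b c * m c)%N.

Lemma qpochS k : qpoch k.+1 = qpoch k * (1 - 'X^(k.+1)).
Proof. by rewrite /qpoch big_nat_recr. Qed.

Lemma PP_decr (n : nat) (m : 'I_n.+1 -> nat) c : (0 < m c)%N ->
  PP m = PP (decr m c) * (1 - 'X^(m c)).
Proof.
move=> hc; rewrite /PP (bigD1 c) //= [in RHS](bigD1 c) //=.
have -> : \prod_(i < n.+1 | i != c) qpoch (decr m c i) = \prod_(i < n.+1 | i != c) qpoch (m i).
  by apply: eq_bigr => i /negbTE ne; rewrite /decr ne subn0.
rewrite /decr eqxx; case: (m c) hc => [//|k] _.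
rewrite qpochS subn1 /=; ring.
Qed.

Lemma ord_nat (R : Type) (idx : R) (op : Monoid.law idx) (N : nat) (F : 'I_N.+1 -> R) :
  \big[op/idx]_(i < N.+1) F i = \big[op/idx]_(0 <= i < N.+1) F (inord i).
Proof. by rewrite big_mkord; apply: eq_bigr => i _; rewrite inord_val. Qed.

Lemma HS_Q (n : nat) (c : 'I_n.+1) (m : 'I_n.+1 -> nat) :
  HS c m = (\sum_(0 <= i < c.+1) m (inord i))%N.
Proof.
rewrite /HS ord_nat (big_cat_nat _ (n:=c.+1)) //=.
rewrite [X in (_ + X)%N]big1_seq ?addn0.
  apply: eq_big_nat => i /andP [_ hi]; rewrite /Hen inordK; last first.
    exact: leq_trans hi (ltn_ord c).
  by rewrite ltnNge -ltnS hi /= mul1n.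
move=> i /andP [_]; rewrite mem_index_iota => /andP [hi hi2].
by rewrite /Hen inordK // hi.
Qed.

Lemma SS_decr (n : nat) (m : 'I_n.+1 -> nat) c : (0 < m c)%N ->
  SS m = (SS (decr m c) + (m c - 1))%N.
Proof.
move=> hc; rewrite /SS (bigD1 c) //= [in RHS](bigD1 c) //=.
rewrite /decr eqxx -(prednK hc) binS bin1 subn1 /=.
have -> : (\sum_(i < n.+1 | i != c) 'C(m i - (i == c), 2) = \sum_(i < n.+1 | i != c) 'C(m i, 2))%N.
  by apply: eq_bigr => i /negbTE ->; rewrite subn0.
by rewrite addnAC.
Qed.

Lemma HS_decr (n : nat) (m : 'I_n.+1 -> nat) c : (0 < m c)%N ->
  HS c m = (HS c (decr m c) + 1)%N.
Proof.
move=> hc; rewrite /HS (bigD1 c) //= [in RHS](bigD1 c) //=.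
rewrite /decr eqxx /Hen ltnn.
have -> : (\sum_(i < n.+1 | i != c) (if (c < i)%N then 0 else 1) * (m i - (i == c)) =
   \sum_(i < n.+1 | i != c) (if (c < i)%N then 0 else 1) * m i)%N.
  by apply: eq_bigr => i /negbTE ->; rewrite subn0.
by rewrite !mul1n subn1 addnAC addn1 prednK.
Qed.

Lemma sum_decr (n : nat) (m : 'I_n.+1 -> nat) c : (0 < m c)%N ->
  (\sum_i decr m c i)%N = ((\sum_i m i) - 1)%N.
Proof.
move=> hc; rewrite (bigD1 c) //= [in RHS](bigD1 c) //=.
have -> : (\sum_(i < n.+1 | i != c) decr m c i = \sum_(i < n.+1 | i != c) m i)%N.
  by apply: eq_bigr => i /negbTE ne; rewrite /decr ne subn0.
rewrite /decr eqxx /= subn1 -subn1 addnC [X in _ = (X - _)%N]addnC addnBA //.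
Qed.

Lemma HS_self (n : nat) (c : 'I_n.+1) (m : 'I_n.+1 -> nat) :
  HS c m = ((\sum_(0 <= i < c) m (inord i)) + m c)%N.
Proof. by rewrite HS_Q big_nat_recr //= inord_val. Qed.

Lemma main_poly (n j : nat) : forall (b : 'I_n.+1) (m : 'I_n.+1 -> nat),
  (\sum_c m c)%N = j ->
  G j b m * PP m = 'X^(SS m + HS b m) * qpoch j.
Proof.
elim: j => [|j IH] b m hs.
  have h0 : forall c, m c = 0%N.
    by move=> c; move: hs; rewrite (bigD1 c) //=; lia.
  have -> : PP m = 1 by rewrite /PP big1 // => c _; rewrite h0 /qpoch big_geq.
  have -> : SS m = 0%N by rewrite /SS big1 // => c _; rewrite h0.
  have -> : HS b m = 0%N by rewrite /HS big1 // => c _; rewrite h0 muln0.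
  have -> : qpoch 0 = 1 by rewrite /qpoch big_geq.
  rewrite /G (eq_bigl xpredT); last first.
    by move=> f; apply/forallP => c; rewrite h0 /cnt big_ord0.
  rewrite (eq_bigr (fun _ => 1)); last by move=> f _; rewrite /Dexp big_geq.
  by rewrite sumr_const card_ffun !card_ord expn0 mulr1.
rewrite G_rec big_distrl /=.
have step : forall c,
  (if (0 < m c)%N then 'X^(j.+1 * Hen b c) * G j c (decr m c) else 0) * PP m =
  qpoch j * 'X^(SS m) *
   ('X^(j.+1 * Hen b c + \sum_(0 <= i < c) m (inord i)) * (1 - 'X^(m c))).
  move=> c; case: ifP => hc; last first.
    have -> : m c = 0%N by move/negbT: hc; rewrite -leqNgt leqn0 => /eqP.
    by rewrite expr0 subrr !mulr0 mul0r.
  have hsd : (\sum_i decr m c i)%N = j by rewrite sum_decr // hs subn1.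
  rewrite (PP_decr hc) mulrA -(mulrA _ (G _ _ _)) IH //.
  have e1 := SS_decr hc; have e2 := HS_decr hc; have e3 := HS_self c m.
  have ee : (j.+1 * Hen b c + (SS (decr m c) + HS c (decr m c)))%N =
            (SS m + (j.+1 * Hen b c + \sum_(0 <= i < c) m (inord i)))%N by lia.
  rewrite mulrA -exprD ee exprD; ring.
rewrite (eq_bigr _ (fun c _ => step c)) -big_distrr /=.
rewrite ord_nat.
set mn := fun i => m (inord i : 'I_n.+1).
have hJ : (\sum_(0 <= i < n.+1) mn i)%N = j.+1 by rewrite -hs ord_nat.
rewrite (eq_big_nat _ _ (F2 := fun c =>
   'X^((\sum_(0 <= i < n.+1) mn i) * (c <= b) + \sum_(0 <= i < c) mn i)%N
     * (1 - 'X^(mn c)))); last first.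
  move=> c /andP [_ hc]; rewrite /mn /Hen inordK // hJ leqNgt.
  by rewrite ltnS; case: (c <= b)%N; rewrite ?muln0 ?muln1.
rewrite key; last exact: ltn_ord.
rewrite hJ qpochS -HS_Q exprD; ring.
Qed.

Lemma binz (k : nat) : ((k%:Z * (k%:Z - 1)) %/ 2)%Z = ('C(k, 2))%:Z.
Proof.
case: k => [|k] //.
have -> : (k.+1%:Z - 1) = k%:Z by rewrite -addn1 PoszD addrK.
by rewrite -PoszM divz_nat bin2 /= divn2.
Qed.

Lemma qpoch_neq0 k : qpoch k != 0.
Proof.
rewrite /qpoch prodf_seq_neq0; apply/allP => i; rewrite mem_index_iota => /andP [hi _].
apply/implyP => _; apply/eqP => h.
have := congr1 (fun p : {poly int} => p`_0) h.
rewrite coefB coef1 coefXn coef0 /=.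
have -> : (0 == i)%N = false by case: i hi {h}.
by rewrite subr0.
Qed.

Theorem mainTheorem12 (n j : nat) (b : 'I_n.+1) (mu : 'I_n.+1 -> int) :
  (1 <= n)%N ->
  \sum_(i < n.+1) mu i = j%:Z ->
  tofrac (gfun j b (muwt mu)) =
    qF ^ ((\sum_(i < n.+1) ((mu i * (mu i - 1)) %/ 2)%Z)
          + \sum_(i < n.+1) (Hen b i)%:Z * mu i)
    * qmultinom j mu.
Proof.
move=> _ hs.
case: (boolP [forall c, 0 <= mu c]) => hpos; last first.
  have -> : qmultinom j mu = 0 by rewrite /qmultinom (negbTE hpos) andbF.
  rewrite mulr0 /gfun big1 ?rmorph0 // => f.
  rewrite cnt_char // => /forallP H; case/negP: hpos; apply/forallP => c.
  by rewrite -(eqP (H c)).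
set m := fun c => `|mu c|%N.
have hm : forall c, mu c = (m c)%:Z.
  by move=> c; rewrite /m; have := forallP hpos c; case: (mu c).
have hsm : (\sum_c m c)%N = j.
  have : ((\sum_c m c)%N)%:Z = j%:Z.
    by rewrite -natz natr_sum -hs; apply: eq_bigr => c _; rewrite natz hm.
  by case.
have -> : gfun j b (muwt mu) = G j b m.
  rewrite /gfun /G; apply: eq_bigl => f; rewrite cnt_char //.
  by apply: eq_forallb => c; rewrite hm eqz_nat.
have -> : (\sum_(i < n.+1) ((mu i * (mu i - 1)) %/ 2)%Z
          + \sum_(i < n.+1) (Hen b i)%:Z * mu i) = ((SS m + HS b m)%N)%:Z.
  rewrite PoszD /SS /HS -!natz !natr_sum; congr (_ + _); apply: eq_bigr => c _.
    by rewrite hm binz natz.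
  by rewrite hm natz PoszM.
have -> : qmultinom j mu = tofrac (qpoch j) / \prod_(c < n.+1) tofrac (qpoch (m c)).
  by rewrite /qmultinom hs eqxx hpos.
have nz : tofrac (PP m) != 0 :> ratfun by rewrite tofrac_eq0 /PP prodf_seq_neq0; apply/allP => i _; rewrite qpoch_neq0.
rewrite -(mulfK nz (tofrac (G j b m))) -rmorphM main_poly // rmorphM /PP rmorph_prod.
rewrite -exprnP /qF rmorphXn.
rewrite -mulrA; congr (_ * _); congr (_ / _); [by rewrite /qpoch rmorph_prod | by rewrite rmorph_prod].
Qed.
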